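(* Let $(F_n)_{n\ge1}$ be the Fibonacci sequence ($F_1=F_2=1$, $F_{n+2}=F_{n+1}+F_n$). For a positive integer $n$ let $z(n)$ be the smallest positive integer $k$ such that $n\mid F_k$, and let $\ell(n):=\operatorname{lcm}(n,z(n))$. Let $\varphi$ denote Euler's totient function. Then there is an absolute constant $C>0$ such that for all real $y>0$, $$\sum_{q>y,\ q \text{ prime}} \frac{1}{\varphi(\ell(q))}\le \frac{C}{y^{1/4}}.$$ *)

(* Defs.v *)
From Stdlib Require Import Reals ClassicalEpsilon.
From mathcomp Require Import all_boot.
Set Implicit Arguments. Unset Strict Implicit. Unset Printing Implicit Defensive.

(* Fibonacci: fib 0 = 0, fib 1 = 1, so fib 1 = fib 2 = 1 (F_1 = F_2 = 1). *)
Fixpoint fib (n : nat) : nat :=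
  match n with
  | 0 => 0
  | S m => match m with 0 => 1 | S k => fib m + fib k end
  end.

Definition is_rank (n k : nat) : Prop :=
  (0 < k)%N /\ (n %| fib k)%N /\ forall j, (0 < j)%N -> (j < k)%N -> ~ (n %| fib j)%N.

(* z(n): the order of appearance (chosen by classical description; unique when it exists) *)
Definition z (n : nat) : nat := epsilon (inhabits 0%N) (fun k => is_rank n k).

Definition ell (n : nat) : nat := lcmn n (z n).

Definition tail_sum (y : R) (N : nat) : R :=
  \big[Rplus/R0]_(0 <= q < N.+1 | prime q && (if Rlt_dec y (INR q) then true else false))
     (Rdiv 1 (INR (totient (ell q)))).

(* Main.v *)
Require Import Defs.
From Stdlib Require Import Reals.
From mathcomp Require Import all_boot.
From HB Require Import structures.
From Stdlib Require Import ClassicalEpsilon.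
From mathcomp Require Import all_algebra finfield ring zify.
Set Implicit Arguments. Unset Strict Implicit. Unset Printing Implicit Defensive.

Section AlgAll.
Import GRing.Theory.
Local Open Scope ring_scope.

Lemma fibSS n : fib n.+2 = (fib n.+1 + fib n)%N.
Proof. by []. Qed.

Section Alg.
Variable q : nat.
Hypothesis pq : prime q.
Local Notation F := 'F_q.
Local Notation M := 'M[F]_2.

Definition Qm : M := \matrix_(i, j) ((i + j < 2)%N)%:R.
Definition Nm : M := \matrix_(i, j) (if (i + j < 2)%N then (if i == j then 1 else 2) else -1).

Lemma ord2_cases (i : 'I_2) : i = 0 \/ i = 1.
Proof. case: i => [[|[|//]] Hi]; [left|right]; exact: val_inj. Qed.

Lemma QmQm : Qm * Qm = Qm + 1.
Proof.
apply/matrixP => i j; rewrite !mxE big_ord_recl big_ord_recl big_ord0 !mxE.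
by case: (ord2_cases i) => ->; case: (ord2_cases j) => -> /=; rewrite ?mxE /= ?(mulr1, mulr0, addr0, add0r).
Qed.
Lemma Qm_pow n : Qm ^+ n.+1 = Qm *+ fib n.+1 + 1 *+ fib n.
Proof.
elim: n => [|n IH]; first by rewrite expr1 /= mulr1n mulr0n addr0.
rewrite exprSr IH mulrDl !mulrnAl mul1r QmQm fibSS mulrnDr mulrnDl.
by rewrite -addrA [1 *+ _ + _]addrC addrA.
Qed.

Lemma Nm_def : Nm = Qm *+ 2 - 1.
Proof.
apply/matrixP => i j; rewrite !mxE.
by case: (ord2_cases i) => ->; case: (ord2_cases j) => -> /=; rewrite ?mxE /=; ring.
Qed.

Lemma NmNm : Nm * Nm = (5 : F)%:M.
Proof.
apply/matrixP => i j; rewrite !mxE big_ord_recl big_ord_recl big_ord0 !mxE.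
by case: (ord2_cases i) => ->; case: (ord2_cases j) => -> /=; rewrite ?mxE /=; ring.
Qed.

Lemma scal_pow (a : F) m : (a%:M : M) ^+ m = (a ^+ m)%:M.
Proof.
elim: m => [|m IH]; first by rewrite !expr0.
by rewrite !exprS IH -mulmxE -scalar_mxM.
Qed.

Lemma pcharM : q \in [pchar M].
Proof.
apply/andP; split => //; apply/eqP/matrixP => i j.
by rewrite mulmxnE !mxE -mulr_natr pchar_Fp_0 // mulr0.
Qed.

Lemma key : (Qm *+ 2) ^+ q = Nm ^+ q + 1.
Proof.
have -> : Qm *+ 2 = Nm + 1 by rewrite Nm_def subrK.
have := pFrobenius_autD_comm pcharM (commr1 Nm).
by rewrite !pFrobenius_autE expr1n.
Qed.

Lemma key_entry (i j : 'I_2) (m : nat) : q = m.*2.+1 ->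
  (Qm i j * (fib q)%:R + (1 : M) i j * (fib q.-1)%:R) * 2 = (5 : F) ^+ m * Nm i j + (1 : M) i j.
Proof.
move=> qE.
have E := congr1 (fun A : M => A i j) key; move: E => /=.
rewrite [(Qm *+ 2) ^+ q]exprMn_n.
have -> : Qm ^+ q = Qm ^+ (q.-1).+1 by rewrite prednK // prime_gt0.
have -> : Nm ^+ q = Nm ^+ (m.*2.+1) by rewrite -qE.
rewrite Qm_pow prednK ?prime_gt0 //.
rewrite exprS -mul2n exprM expr2 NmNm scal_pow -mulmxE mul_mx_scalar.
rewrite !mxE mulmxnE !mxE.
rewrite !mulmxnE !mxE => <-.
have h2 : (2:F) ^+ q = 2 by have := expf_card (2:F); rewrite card_Fp.
have h2q : forall x : F, x *+ 2 ^ q = x *+ 2.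
  by move=> x; rewrite -mulr_natr natrX h2 mulr_natr.
by rewrite h2q !mulr_natr.
Qed.
End Alg.

Lemma fibS1 n : (0 < n)%N -> fib n.+1 = (fib n + fib n.-1)%N.
Proof. by case: n. Qed.

Lemma fib_modq (q : nat) : prime q -> q != 2%N -> q != 5%N ->
  ~~ (q %| fib q)%N /\ ((q %| fib q.-1)%N \/ (q %| fib q.+1)%N).
Proof.
move=> pq q2 q5.
have chF := pchar_Fp pq.
have dv n : (q %| n)%N = ((n%:R : 'F_q) == 0) by rewrite (dvdn_pcharf chF).
have oq : odd q by case: (even_prime pq) => // E; rewrite E in q2.
set m := q./2.
have qE : q = m.*2.+1 by rewrite -[LHS]odd_double_half oq.
have n2 : (2 : 'F_q) != 0 by rewrite -dv dvdn_prime2 //.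
have n5 : (5 : 'F_q) != 0 by rewrite -dv dvdn_prime2 //.
have E01 := key_entry pq 0 1 qE.
have E00 := key_entry pq 0 0 qE.
have E11 := key_entry pq 1 1 qE.
rewrite !mxE /= in E01 E00 E11.
set s := (5 : 'F_q) ^+ m in E01 E00 E11.
set a := (fib q)%:R : 'F_q in E01 E00 E11.
set b := (fib q.-1)%:R : 'F_q in E01 E00 E11.
have e01 : a * 2 = s * 2 by rewrite mul1r mul0r !addr0 in E01.
have e00 : (a + b) * 2 = s + 1 by rewrite !mul1r mulr1 in E00.
have e11 : b * 2 = 1 - s by rewrite mul0r add0r mul1r mulrN1 addrC in E11.
have ha : a = s by apply: (mulIf n2).
have s2 : s ^+ 2 = 1.
  have h5 : (5 : 'F_q) ^+ (m.*2).+1 = 5.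
    by rewrite -qE; have := expf_card (5 : 'F_q); rewrite card_Fp.
  rewrite exprS in h5.
  rewrite /s -exprM muln2.
  by apply: (mulIf n5); rewrite mulrC h5 mul1r.
have cE : ((fib q.+1)%:R : 'F_q) = a + b.
  by rewrite /a /b -natrD fibS1 // prime_gt0.
split.
  by rewrite dv -/a ha; apply: expf_neq0 n5.
move: s2; move/eqP; rewrite sqrf_eq1 => /orP [] /eqP hs.
  left; rewrite dv -/b; apply/eqP; apply: (mulIf n2).
  by rewrite e11 hs subrr mul0r.
right; rewrite dv cE; apply/eqP; apply: (mulIf n2).
by rewrite e00 hs addNr mul0r.
Qed.

End AlgAll.

Lemma fib_le2 k : fib k <= 2 ^ k.
Proof.
elim: k {-2}k (leqnn k) => [|k IH] [|[|j]] //= hj.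
rewrite expnS mul2n -addnn; apply: leq_add.
  by apply: (leq_trans (IH j.+1 hj)); rewrite leq_exp2l.
by apply: (leq_trans (IH j (ltnW hj))); rewrite leq_exp2l // ltnW.
Qed.

Lemma fib_gt0 k : 0 < k -> 0 < fib k.
Proof.
elim: k {-2}k (leqnn k) => [|k IH] [|[|j]] //= hj _.
by rewrite addn_gt0 (IH j.+1 hj).
Qed.

Lemma prod_ge2 (s : seq nat) (f : nat -> nat) :
  (forall p, p \in s -> 2 <= f p) -> 2 ^ size s <= \prod_(p <- s) f p.
Proof.
elim: s => [|x s IH] h; first by rewrite big_nil.
rewrite big_cons /= expnS; apply: leq_mul; first by apply: h; rewrite mem_head.
by apply: IH => p ps; apply: h; rewrite in_cons ps orbT.
Qed.

Lemma nE n : 0 < n -> n = \prod_(p <- primes n) p ^ logn p n.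
Proof. by move=> n0; rewrite {1}(prod_prime_decomp n0) prime_decompE big_map. Qed.

Lemma primes_size n : 0 < n -> 2 ^ size (primes n) <= n.
Proof.
move=> n0; rewrite {2}(nE n0); apply: prod_ge2 => p.
rewrite -logn_gt0 => hl; have pp : prime p by move: hl; rewrite logn_gt0 mem_primes => /andP[].
apply: (leq_trans (prime_gt1 pp)); rewrite -{1}(expn1 p) leq_exp2l //; exact: prime_gt1.
Qed.

Lemma tot_aux (s : seq nat) (e : nat -> nat) :
  uniq s -> all prime s -> (forall p, p \in s -> 0 < e p) ->
  \prod_(p <- s) p ^ e p <= (if 2 \in s then 2 else 1) * (\prod_(p <- s) (p.-1 * p ^ (e p).-1)) ^ 2.
Proof.
elim: s => [|p s IH] /=; first by rewrite !big_nil.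
move=> /andP [ps us] /andP [pp aps] he.
have hs := IH us aps (fun q qs => he q (mem_behead (s:=p :: s) qs)).
rewrite !big_cons in_cons.
have ep : 0 < e p by apply: he; rewrite mem_head.
set A := \prod_(j <- s) j ^ e j in hs *.
set B := \prod_(j <- s) (j.-1 * j ^ (e j).-1) in hs *.
have p2 := prime_gt1 pp.
have pe : p ^ e p = p * p ^ (e p).-1 by rewrite -expnS prednK.
set t := p ^ (e p).-1 in pe *.
have t1 : 0 < t by rewrite expn_gt0 prime_gt0.
case: (eqVneq p 2) => [E|ne2] /=.
  have n2 : (2 \in s) = false by apply/negbTE; rewrite -E.
  rewrite n2 in hs; rewrite pe E /=.
  nia.
have hp : p * t <= (p.-1 * t) ^ 2.
  have p3 : 3 <= p by move: ne2 p2; lia.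
  have h1 : p <= p.-1 * p.-1 by nia.
  have h2 : t <= t * t by nia.
  have -> : (p.-1 * t) ^ 2 = (p.-1 * p.-1) * (t * t) by rewrite expnMn !expnS expn0 !muln1.
  exact: leq_mul.
rewrite pe expnMn.
have := leq_mul hp hs; set X := (p.-1 * t) ^ 2; set Y := B ^ 2.
case: (2 \in s) => /=; lia.
Qed.

Lemma totient_sq n : 0 < n -> n <= 2 * totient n ^ 2.
Proof.
move=> n0; rewrite totientE // {1}(nE n0).
apply: (leq_trans (tot_aux (primes_uniq n) _ _)).
- by apply/allP => p; rewrite mem_primes => /andP[].
- by move=> p; rewrite logn_gt0.
- by rewrite leq_mul2r; case: ifP => _; rewrite ?orbT.
Qed.


Lemma rank_ex q : prime q -> exists k, [/\ 0 < k, k <= q.+1 & q %| fib k].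
Proof.
move=> pq.
case: (eqVneq q 2) => [->|q2]; first by exists 3.
case: (eqVneq q 5) => [->|q5]; first by exists 5.
have [_ [h|h]] := fib_modq pq q2 q5.
  exists q.-1; split => //; last by lia.
  have := prime_gt1 pq; have : q != 2 := q2; lia.
by exists q.+1.
Qed.

Lemma z_spec q : prime q -> is_rank q (z q) /\ z q <= q.+1.
Proof.
move=> pq.
have [k [k0 kq dk]] := rank_ex pq.
have exP : exists k, (0 < k) && (q %| fib k) by exists k; rewrite k0 dk.
have hr : exists k, is_rank q k.
  case: (ex_minnP exP) => m /andP [m0 dm] mmin.
  exists m; split => //; split => // j j0 jm dj.
  have := mmin j; rewrite j0 dj => /(_ isT); lia.
have R := epsilon_spec (inhabits 0) (fun k => is_rank q k) hr.
rewrite -/(z q) in R.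
split => //.
case: R => z0 [dz zmin].
rewrite leqNgt; apply/negP => hz.
apply: (zmin k) => //; lia.
Qed.

Lemma z_ndvd q : prime q -> q != 5 -> ~~ (q %| z q).
Proof.
move=> pq q5; have [[z0 [dz _]] zq] := z_spec pq.
apply/negP => /dvdnP [c hc].
have q1 := prime_gt1 pq.
have c1 : c = 1.
  rewrite hc in z0 zq; nia.
rewrite c1 mul1n in hc; rewrite hc in dz.
case: (eqVneq q 2) => [E|q2]; first by move: dz; rewrite E.
by have [h _] := fib_modq pq q2 q5; rewrite dz in h.
Qed.

Lemma tot_ell q : prime q -> q != 5 -> totient (ell q) = q.-1 * totient (z q).
Proof.
move=> pq q5.
have co : coprime q (z q) by rewrite prime_coprime // z_ndvd.
rewrite /ell /lcmn (eqP co) divn1 totient_coprime // totient_prime //.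
Qed.

Lemma ell_pos q : prime q -> 0 < ell q.
Proof.
move=> pq; have [[z0 _] _] := z_spec pq.
by rewrite /ell lcmn_gt0 prime_gt0.
Qed.

From Stdlib Require Import Ring Field Reals Lra Psatz.
Delimit Scope nat_scope with N.
Open Scope R_scope.

Lemma RplusA : associative Rplus. Proof. by move=> x y z; rewrite Rplus_assoc. Qed.
HB.instance Definition _ := Monoid.isComLaw.Build R R0 Rplus RplusA Rplus_comm Rplus_0_l.

Definition r4 (x : R) := sqrt (sqrt x).

Lemma r4_pos x : 0 < x -> 0 < r4 x.
Proof. move=> hx; apply: sqrt_lt_R0; exact: sqrt_lt_R0. Qed.

Lemma r4_pow x : 0 <= x -> r4 x * r4 x * (r4 x * r4 x) = x.
Proof. move=> hx; rewrite /r4 !sqrt_sqrt //; exact: sqrt_pos. Qed.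

Lemma r4_le x y : 0 <= x <= y -> r4 x <= r4 y.
Proof. move=> [h1 h2]; apply: sqrt_le_1_alt; exact: sqrt_le_1_alt. Qed.

Lemma L_g4 (n : nat) : (1 <= n)%N ->
  / (INR n * r4 (INR n)) <= 8 * (/ r4 (INR n) - / r4 (INR n.+1)).
Proof.
move=> hn.
have n1 : 1 <= INR n by apply: (le_INR 1); apply/leP.
rewrite S_INR.
have ha : 0 < r4 (INR n) by apply: r4_pos; lra.
have hb : 0 < r4 (INR n + 1) by apply: r4_pos; lra.
have a4 := @r4_pow (INR n) ltac:(lra).
have b4 := @r4_pow (INR n + 1) ltac:(lra).
set a := r4 (INR n) in ha a4 *; set b := r4 (INR n + 1) in hb b4 *.
have ab : a <= b by apply: r4_le; lra.
have h1 : (b - a) * (4 * (b * b * b)) >= 1.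
  have : (b - a) * (a*a*a + a*a*b + a*b*b + b*b*b) = 1 by nra.
  have := Rmult_le_pos (b-a) (3*b*b+2*a*b+a*a) ltac:(lra) ltac:(nra).
  have := Rmult_le_pos (b-a) (a*a*a + a*a*b + a*b*b + b*b*b) ltac:(lra) ltac:(nra).
  nra.
have h2 : 8 * (a*a*a*a) * (b - a) >= b.
  have : 8 * (a*a*a*a) * (b - a) * (b*b*b) >= 2 * (a*a*a*a) by nra.
  have : 2 * (a*a*a*a) >= b*b*b*b by nra.
  have hb3 : 0 < b*b*b by nra.
  nra.
rewrite -a4.
have -> : 8 * (/ a - / b) = 8 * (b - a) / (a * b) by field; lra.
apply: (Rmult_le_reg_r (a*a*a*a*a*b)); first by nra.
have -> : / (a * a * (a * a) * a) * (a * a * a * a * a * b) = b by field; lra.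
have -> : 8 * (b - a) / (a * b) * (a * a * a * a * a * b) = 8 * (a*a*a*a) * (b - a) by field; lra.
lra.
Qed.

Lemma L_g2 (k : nat) : (1 <= k)%N ->
  sqrt (INR k) / (INR k * INR k) <= 4 * (/ sqrt (INR k) - / sqrt (INR k.+1)).
Proof.
move=> hk.
have n1 : 1 <= INR k by apply: (le_INR 1); apply/leP.
rewrite S_INR.
have ha := sqrt_lt_R0 (INR k) ltac:(lra).
have hb := sqrt_lt_R0 (INR k + 1) ltac:(lra).
have a2 := sqrt_sqrt (INR k) ltac:(lra).
have b2 := sqrt_sqrt (INR k + 1) ltac:(lra).
set a := sqrt (INR k) in ha a2 *; set b := sqrt (INR k + 1) in hb b2 *.
have ab : a <= b by apply: sqrt_le_1_alt; lra.
have h1 : (b - a) * (2 * b) >= 1.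
  have := Rmult_le_pos (b-a) (b-a) ltac:(lra) ltac:(lra). nra.
rewrite -a2.
have -> : 4 * (/ a - / b) = 4 * (b - a) / (a * b) by field; lra.
apply: (Rmult_le_reg_r (a*a*a*b)); first by repeat apply: Rmult_lt_0_compat.
have -> : a / (a * a * (a * a)) * (a * a * a * b) = b by field; lra.
have -> : 4 * (b - a) / (a * b) * (a * a * a * b) = 4 * (a*a) * (b - a) by field; lra.
nra.
Qed.

Section Sums.
Variable T : eqType.

Lemma Rsum_le (r : seq T) (P : pred T) (F G : T -> R) :
  (forall i, P i -> F i <= G i) ->
  \big[Rplus/R0]_(i <- r | P i) F i <= \big[Rplus/R0]_(i <- r | P i) G i.
Proof.
move=> h; elim: r => [|x r IH]; first by rewrite !big_nil; lra.
rewrite !big_cons; case: ifP => Px //; have := h x Px; lra.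
Qed.

Lemma Rsum_ge0 (r : seq T) (P : pred T) (F : T -> R) :
  (forall i, P i -> 0 <= F i) -> 0 <= \big[Rplus/R0]_(i <- r | P i) F i.
Proof.
move=> h; elim: r => [|x r IH]; first by rewrite !big_nil; lra.
rewrite !big_cons; case: ifP => Px //; have := h x Px; lra.
Qed.

Lemma Rsum_sub (r : seq T) (P Q : pred T) (F : T -> R) :
  (forall i, P i -> Q i) -> (forall i, Q i -> 0 <= F i) ->
  \big[Rplus/R0]_(i <- r | P i) F i <= \big[Rplus/R0]_(i <- r | Q i) F i.
Proof.
move=> hPQ h; elim: r => [|x r IH]; first by rewrite !big_nil; lra.
rewrite !big_cons; case: ifP => Px.
  by rewrite (hPQ x Px); lra.
case: ifP => Qx //; have := h x Qx; lra.
Qed.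

Lemma Rsum_const (r : seq T) (P : pred T) (c : R) :
  \big[Rplus/R0]_(i <- r | P i) c = INR (count P r) * c.
Proof.
elim: r => [|x r IH]; first by rewrite big_nil /=; lra.
rewrite big_cons IH /=; case: (P x).
  change (c + INR (count P r) * c = INR (S (count P r)) * c); rewrite S_INR; lra.
change (INR (count P r) * c = INR (count P r) * c); lra.
Qed.

Lemma Rsum_in (r : seq T) (P : pred T) (F : T -> R) i :
  i \in r -> P i -> (forall j, P j -> 0 <= F j) ->
  F i <= \big[Rplus/R0]_(j <- r | P j) F j.
Proof.
move=> ir Pi h; elim: r ir => [//|x r IH].
rewrite in_cons big_cons => /orP [/eqP <-|ir].
  rewrite Pi; have := Rsum_ge0 r h; lra.
have := IH ir; case: ifP => Px //; have := h x Px; lra.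
Qed.
End Sums.

Lemma telescope (Q : pred nat) (g : nat -> R) (G : R) N :
  (forall k, Q k -> Q k.+1) -> (forall k, Q k -> 0 <= g k.+1) ->
  (forall k, Q k -> g k <= G) -> 0 <= G ->
  \big[Rplus/R0]_(0 <= k < N.+1 | Q k) (g k - g k.+1) <= G.
Proof.
move=> Qup g0 gG G0; rewrite big_mkcond /=.
suff: (Q N -> \big[Rplus/R0]_(0 <= k < N.+1) (if Q k then g k - g k.+1 else R0) <= G - g N.+1) /\
      (~~ Q N -> \big[Rplus/R0]_(0 <= k < N.+1) (if Q k then g k - g k.+1 else R0) = 0).
  move=> [h1 h2]; case: (boolP (Q N)) => QN.
    by have := h1 QN; have := g0 N QN; lra.
  by rewrite h2 //.
elim: N => [|N [IH1 IH2]].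
  rewrite big_nat1; split => h; first by rewrite h; have := gG 0%N h; lra.
  by rewrite (negbTE h).
rewrite big_nat_recr //=; split => h.
  rewrite h; case: (boolP (Q N)) => QN.
    have := IH1 QN; lra.
  rewrite IH2 //; have := gG _ h; lra.
have QN : ~~ Q N by apply: contra h; exact: Qup.
by rewrite (negbTE h) IH2 //; lra.
Qed.

Lemma count_down (Q : pred nat) (X : R) n :
  ~~ Q 0%N -> (forall j k, (1 <= j <= k)%N -> Q k -> Q j) ->
  (forall k, Q k -> INR k <= X) -> 0 <= X -> INR (count Q (iota 0 n)) <= X.
Proof.
move=> Q0 Qdown QX X0.
suff [_ H]: (count Q (iota 0 n) <= n.-1)%N /\ ((0 < count Q (iota 0 n))%N -> Q (count Q (iota 0 n))).
  case: (posnP (count Q (iota 0 n))) => [->|hc]; first by simpl; lra.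
  exact: QX (H hc).
elim: n => [|n [IH1 IH2]]; first by [].
rewrite -addn1 iotaD count_cat /= add0n addn0.
case: (boolP (Q n)) => Qn /=.
  have n0 : (0 < n)%N by case: n Qn {IH1 IH2} => // /negPn; rewrite (negbTE Q0).
  split; first by rewrite addn1 /=; lia.
  move=> _; apply: (Qdown _ n) => //; apply/andP; split; lia.
by rewrite addn0; split => //; lia.
Qed.


Definition yb (y : R) (q : nat) : bool := if Rlt_dec y (INR q) then true else false.
Definition tq (q : nat) : R := Rdiv 1 (INR (totient (ell q))).
Definition g4 (n : nat) : R := 128 * / r4 (INR n).
Definition bq (q : nat) : R :=
  if (z q * z q < q)%N then 4 / (INR q * sqrt (INR (z q))) else R0.

Lemma INR_ge1 n : (1 <= n)%N -> 1 <= INR n.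
Proof. by move=> h; apply: (le_INR 1); apply/leP. Qed.

Lemma r4_16 : r4 16 = 2.
Proof.
rewrite /r4 (_ : 16 = 4 * 4); last by lra.
rewrite sqrt_square; last by lra.
rewrite (_ : 4 = 2 * 2); last by lra.
rewrite sqrt_square; lra.
Qed.

Lemma g4_dec n : (1 <= n)%N -> 0 <= g4 n - g4 n.+1.
Proof.
move=> hn; have := L_g4 hn; have n1 := INR_ge1 hn.
have : 0 < / (INR n * r4 (INR n)).
  apply: Rinv_0_lt_compat; apply: Rmult_lt_0_compat; first lra.
  apply: r4_pos; lra.
rewrite /g4; lra.
Qed.

Lemma bq_ge0 q : prime q -> 0 <= bq q.
Proof.
move=> pq; have hq : (1 <= q)%N by apply: prime_gt0.
have [[z0 _] _] := z_spec pq.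
rewrite /bq; case: ifP => _; last by lra.
have := INR_ge1 hq => h.
apply: Rmult_le_pos; first lra.
apply: Rlt_le; apply: Rinv_0_lt_compat.
apply: Rmult_lt_0_compat; first lra.
apply: sqrt_lt_R0; have := INR_ge1 z0; lra.
Qed.

Lemma per_prime q : prime q -> tq q <= (g4 q - g4 q.+1) + bq q.
Proof.
move=> pq.
have q2 : (2 <= q)%N := prime_gt1 pq.
have q1 : (1 <= q)%N by lia.
have hq : 2 <= INR q by apply: (le_INR 2); apply/leP.
have hl := L_g4 q1.
have hb := bq_ge0 pq.
have hd := g4_dec q1.
have r4q : 0 < r4 (INR q) by apply: r4_pos; lra.
have hpos : 0 < / (INR q * r4 (INR q)).
  by apply: Rinv_0_lt_compat; apply: Rmult_lt_0_compat; lra.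
have ht : tq q <= 1.
  rewrite /tq; have : (1 <= totient (ell q))%N by rewrite totient_gt0 ell_pos.
  move/INR_ge1 => h; rewrite /Rdiv Rmult_1_l -Rinv_1.
  by apply: Rinv_le_contravar; lra.
case: (eqVneq q 5%N) => [E|q5].
  have r5 : r4 (INR q) <= 2.
    rewrite -r4_16; apply: r4_le; rewrite E /=; lra.
  have : / 10 <= / (INR q * r4 (INR q)).
    apply: Rinv_le_contravar; first by apply: Rmult_lt_0_compat; lra.
    have h5 : INR q = 5 by rewrite E /=; lra.
    rewrite h5; rewrite h5 in r5; lra.
  rewrite /g4; lra.
rewrite /tq tot_ell // mult_INR.
have [[k0 [dk kmin]] kq] := z_spec pq.
set k := z q in k0 dk kmin kq *.
have f0 : (1 <= totient k)%N by rewrite totient_gt0.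
have fk := totient_sq k0.
have hf : INR k <= 2 * (INR (totient k) * INR (totient k)).
  rewrite -mult_INR -(INR_IZR_INZ 2) -mult_INR; apply: le_INR; apply/leP.
  by move: fk; rewrite expnS expn1; lia.
have hk1 := INR_ge1 k0.
have hf1 := INR_ge1 f0.
have s0 : 0 < sqrt (INR k) by apply: sqrt_lt_R0; lra.
have ss := sqrt_sqrt (INR k) ltac:(lra).
have hs : sqrt (INR k) <= 2 * INR (totient k) by nra.
have hq1 : INR q = INR q.-1 + 1 by rewrite -S_INR prednK.
have key : 1 / (INR q.-1 * INR (totient k)) <= 4 / (INR q * sqrt (INR k)).
  have -> : 4 / (INR q * sqrt (INR k)) = 1 / (INR q * sqrt (INR k) / 4) by field; lra.
  rewrite /Rdiv !Rmult_1_l; apply: Rinv_le_contravar.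
    apply: Rmult_lt_0_compat; last lra; apply: Rmult_lt_0_compat; lra.
  have : INR q / 2 <= INR q.-1 by lra.
  nra.
case: (ltnP (k * k) q) => hk.
  rewrite /bq -/k hk; lra.
have : r4 (INR q) <= sqrt (INR k).
  have -> : sqrt (INR k) = r4 (INR (k * k)).
    by rewrite /r4 mult_INR sqrt_square //; lra.
  apply: r4_le; split; first lra; apply: le_INR; apply/leP; exact: hk.
move=> hr.
have : 4 / (INR q * sqrt (INR k)) <= 4 * / (INR q * r4 (INR q)).
  rewrite /Rdiv; apply: Rmult_le_compat_l; first lra.
  apply: Rinv_le_contravar; first nra.
  apply: Rmult_le_compat_l; lra.
rewrite /g4 in hd *; lra.
Qed.

Lemma Rinv_ge0 x : 0 <= x -> 0 <= / x.
Proof.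
move=> hx; case: (Req_dec x 0) => [->|h]; first by rewrite Rinv_0; lra.
by apply: Rlt_le; apply: Rinv_0_lt_compat; lra.
Qed.

Lemma Rsum_split (r : seq nat) (P : pred nat) (F G : nat -> R) :
  \big[Rplus/R0]_(i <- r | P i) (F i + G i) =
  \big[Rplus/R0]_(i <- r | P i) F i + \big[Rplus/R0]_(i <- r | P i) G i.
Proof.
elim: r => [|x r IH]; first by rewrite !big_nil; lra.
rewrite !big_cons IH; case: ifP => _; lra.
Qed.

Lemma Rsum_mkcond (r : seq nat) (P : pred nat) (F : nat -> R) :
  \big[Rplus/R0]_(i <- r | P i) F i = \big[Rplus/R0]_(i <- r) (if P i then F i else R0).
Proof.
elim: r => [|x r IH]; first by rewrite !big_nil.
rewrite !big_cons IH; case: ifP => _ //; lra.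
Qed.

Lemma count_primes_dvd n N' (b : pred nat) : (0 < n)%N ->
  (count (fun q => prime q && (q %| n) && b q) (index_iota 0 N') <= size (primes n))%N.
Proof.
move=> n0; rewrite -size_filter; apply: uniq_leq_size.
  by apply: filter_uniq; exact: iota_uniq.
move=> p; rewrite mem_filter => /andP [/andP [/andP [pp dp] _] _].
by rewrite mem_primes pp n0 dp.
Qed.

Lemma count_le_k k N' (b : pred nat) : (0 < k)%N ->
  (count (fun q => prime q && (q %| fib k) && b q) (index_iota 0 N') <= k)%N.
Proof.
move=> k0; have f0 := fib_gt0 k0.
apply: (leq_trans (count_primes_dvd _ _ f0)).
have := leq_trans (primes_size f0) (fib_le2 k).
by rewrite leq_exp2l.
Qed.

Definition cqk (q k : nat) : R :=
  if (k == z q) && (k * k < q)%N then 4 / (INR q * sqrt (INR k)) else R0.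

Lemma cqk_ge0 q k : 0 <= cqk q k.
Proof.
rewrite /cqk; case: ifP => _; last lra.
apply: Rmult_le_pos; first lra; apply: Rinv_ge0.
apply: Rmult_le_pos; [exact: pos_INR | exact: sqrt_pos].
Qed.

Lemma Bpart_regroup y N :
  \big[Rplus/R0]_(q <- index_iota 0 N.+1 | prime q && yb y q) bq q <=
  \big[Rplus/R0]_(k <- index_iota 0 N.+1)
     \big[Rplus/R0]_(q <- index_iota 0 N.+1 | prime q && yb y q) cqk q k.
Proof.
set r := index_iota 0 N.+1.
rewrite big_seq_cond.
apply: (Rle_trans _ (\big[Rplus/R0]_(q <- r | (q \in r) && (prime q && yb y q))
                      \big[Rplus/R0]_(k <- r) cqk q k)).
  apply: Rsum_le => q /andP [qr /andP [pq _]].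
  rewrite /bq; case: ifP => hk.
    have [[z0 _] _] := z_spec pq.
    have zr : z q \in r.
      rewrite mem_index_iota; move: qr; rewrite mem_index_iota => /andP [_ qN]; apply/andP; split => //; nia.
    have := @Rsum_in _ r (fun _ => true) (fun k => cqk q k) (z q) zr isT
      (fun j _ => cqk_ge0 q j).
    by rewrite /cqk eqxx hk.
  by apply: Rsum_ge0 => k _; exact: cqk_ge0.
rewrite exchange_big /=.
apply: Rsum_le => k _.
apply: Rsum_sub => [q /andP [] //|q _]; exact: cqk_ge0.
Qed.

Definition mk (y : R) (k : nat) : R := / Rmax y (INR (k * k)).
Definition Dk (y : R) (k : nat) : R := INR k * (4 * mk y k * / sqrt (INR k)).

Lemma step_c y N k : 0 < y ->
  \big[Rplus/R0]_(q <- index_iota 0 N.+1 | prime q && yb y q) cqk q k <= Dk y k.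
Proof.
move=> y0.
set r := index_iota 0 N.+1.
have m0 : 0 < mk y k.
  by apply: Rinv_0_lt_compat; have := Rmax_l y (INR (k * k)); lra.
set x := 4 * mk y k * / sqrt (INR k).
have x0 : 0 <= x.
  apply: Rmult_le_pos; first lra; apply: Rinv_ge0; exact: sqrt_pos.
pose Q := fun q => prime q && (q %| fib k) && true.
apply: (Rle_trans _ (\big[Rplus/R0]_(q <- r | prime q && yb y q) (if Q q then x else R0))).
  apply: Rsum_le => q /andP [pq hy].
  rewrite /cqk; case: ifP => [/andP [/eqP kz hk]|_]; last by case: ifP => _; lra.
  have [[z0 [dz _]] _] := z_spec pq.
  rewrite /Q pq /= -kz in dz *; rewrite dz /=.
  have hyq : y < INR q by move: hy; rewrite /yb; case: Rlt_dec.
  have hkq : INR (k * k) <= INR q by apply: le_INR; apply/leP; lia.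
  have hmax : 0 < Rmax y (INR (k * k)) by have := Rmax_l y (INR (k * k)); lra.
  have hq0 : 0 < INR q by lra.
  have hiq : / INR q <= mk y k.
    apply: Rinv_le_contravar => //; apply: Rmax_lub; lra.
  have s0 : 0 < sqrt (INR k).
    apply: sqrt_lt_R0; have : (1 <= k)%N by rewrite kz. move/INR_ge1; lra.
  rewrite /x /Rdiv Rinv_mult.
  have := Rinv_0_lt_compat _ s0; nra.
apply: (Rle_trans _ (\big[Rplus/R0]_(q <- r) (if Q q then x else R0))).
  by apply: Rsum_sub => // q _; case: ifP => _; lra.
rewrite -Rsum_mkcond Rsum_const /Dk -/x.
case: (posnP k) => [k0|k0].
  have -> : x = 0 by rewrite /x k0 /= sqrt_0 Rinv_0; lra.
  lra.
apply: Rmult_le_compat_r => //; apply: le_INR; apply/leP.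
exact: count_le_k.
Qed.

Lemma r4_sq k : r4 (INR (k * k)) = sqrt (INR k).
Proof. by rewrite /r4 mult_INR sqrt_square //; exact: pos_INR. Qed.

Definition Q1 (y : R) (k : nat) : bool :=
  (0 < k)%N && (if Rle_dec (INR (k * k)) y then true else false).
Definition Q2 (y : R) (k : nat) : bool :=
  (0 < k)%N && (if Rlt_dec y (INR (k * k)) then true else false).
Definition g2 (k : nat) : R := 16 * / sqrt (INR k).

Lemma Dk_split y k : 0 < y ->
  Dk y k <= (if Q1 y k then 4 * (r4 y / y) else R0) +
            (if Q2 y k then g2 k - g2 k.+1 else R0).
Proof.
move=> y0; rewrite /Q1 /Q2 /Dk.
case: (posnP k) => [->|k0] /=; first by lra.
have k1 := INR_ge1 k0.
have s0 : 0 < sqrt (INR k) by apply: sqrt_lt_R0; lra.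
have ss := sqrt_sqrt (INR k) ltac:(lra).
have -> : INR k * (4 * mk y k * / sqrt (INR k)) = 4 * sqrt (INR k) * mk y k.
  rewrite -{1}ss; field; lra.
rewrite /mk.
case: Rle_dec => hle; case: Rlt_dec => hlt /=; try lra.
  rewrite Rmax_left //.
  have : sqrt (INR k) <= r4 y by rewrite -r4_sq; apply: r4_le; split => //; exact: pos_INR.
  have := Rinv_0_lt_compat _ y0.
  rewrite /Rdiv; nra.
rewrite Rmax_right; last lra.
have := L_g2 k0; rewrite /g2 mult_INR /Rdiv; lra.
Qed.

Lemma step_d y N : 0 < y ->
  \big[Rplus/R0]_(k <- index_iota 0 N.+1) Dk y k <= 20 / r4 y.
Proof.
move=> y0.
have a0 : 0 < r4 y by exact: r4_pos.
apply: (Rle_trans _ (\big[Rplus/R0]_(k <- index_iota 0 N.+1)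
   ((if Q1 y k then 4 * (r4 y / y) else R0) + (if Q2 y k then g2 k - g2 k.+1 else R0)))).
  by apply: Rsum_le => k _; exact: Dk_split.
rewrite Rsum_split -!Rsum_mkcond Rsum_const.
have h1 : INR (count (Q1 y) (index_iota 0 N.+1)) <= sqrt y.
  rewrite /index_iota subn0; apply: count_down => //.
  - move=> j k /andP [j1 jk] /andP [k0]; rewrite /Q1; case: Rle_dec => // hk _.
    rewrite j1; case: Rle_dec => // hj; exfalso; apply: hj.
    apply: Rle_trans hk; apply: le_INR; apply/leP; nia.
  - move=> k /andP [_]; case: Rle_dec => // hk _.
    rewrite -(sqrt_square (INR k)); last exact: pos_INR.
    by apply: sqrt_le_1_alt; rewrite -mult_INR.
  - exact: sqrt_pos.
have h2 : \big[Rplus/R0]_(0 <= k < N.+1 | Q2 y k) (g2 k - g2 k.+1) <= 16 / r4 y.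
  apply: telescope.
  - move=> k /andP [k0]; rewrite /Q2; case: Rlt_dec => // hk _.
    case: Rlt_dec => // hk'; exfalso; apply: hk'.
    apply: Rlt_le_trans hk _; apply: le_INR; apply/leP; nia.
  - move=> k _; rewrite /g2; apply: Rmult_le_pos; first lra.
    apply: Rinv_ge0; exact: sqrt_pos.
  - move=> k /andP [k0]; case: Rlt_dec => // hk _.
    rewrite /g2 /Rdiv; apply: Rmult_le_compat_l; first lra.
    apply: Rinv_le_contravar => //.
    by rewrite -r4_sq; apply: r4_le; lra.
  - apply: Rmult_le_pos; first lra; apply: Rlt_le; exact: Rinv_0_lt_compat.
have e1 : sqrt y * (4 * (r4 y / y)) = 4 / r4 y.
  have sy : sqrt y = r4 y * r4 y by rewrite /r4 sqrt_sqrt //; exact: sqrt_pos.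
  have := @r4_pow y ltac:(lra) => y4.
  rewrite sy; set a := r4 y in y4 a0 *; rewrite -y4; field; lra.
have : 0 <= 4 * (r4 y / y).
  apply: Rmult_le_pos; first lra; apply: Rmult_le_pos; first lra.
  apply: Rlt_le; exact: Rinv_0_lt_compat.
move=> hc.
have := Rmult_le_compat_r _ _ _ hc h1.
rewrite e1.
have -> : 20 / r4 y = 4 / r4 y + 16 / r4 y by field; lra.
move=> h; apply: Rplus_le_compat => //.
Qed.

Lemma Rpower_r4 y : 0 < y -> Rpower y (Rdiv 1 4) = r4 y.
Proof.
move=> y0.
have -> : Rdiv 1 4 = / 2 * / 2 by field.
rewrite -Rpower_mult Rpower_sqrt // Rpower_sqrt //.
exact: sqrt_lt_R0.
Qed.

Theorem lemma2p4 :
  exists C : R, Rlt R0 C /\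
    forall (y : R), Rlt R0 y -> forall N : nat,
      Rle (tail_sum y N) (Rdiv C (Rpower y (Rdiv 1 4))).
Proof.
exists 148; split; first lra.
move=> y y0 N.
rewrite Rpower_r4 //.
have a0 : 0 < r4 y by exact: r4_pos.
rewrite /tail_sum.
set P := fun q => prime q && yb y q.
apply: (Rle_trans _ (\big[Rplus/R0]_(0 <= q < N.+1 | P q) ((g4 q - g4 q.+1) + bq q))).
  by apply: Rsum_le => q /andP [pq _]; exact: per_prime.
rewrite Rsum_split.
have hA : \big[Rplus/R0]_(0 <= q < N.+1 | P q) (g4 q - g4 q.+1) <= 128 / r4 y.
  apply: (Rle_trans _ (\big[Rplus/R0]_(0 <= q < N.+1 | yb y q && (0 < q)%N) (g4 q - g4 q.+1))).
    apply: Rsum_sub.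
      by move=> q /andP [pq hq]; rewrite hq prime_gt0.
    by move=> q /andP [_ hq]; exact: g4_dec.
  apply: telescope.
  - move=> k /andP [hk _]; apply/andP; split => //.
    move: hk; rewrite /yb; case: Rlt_dec => // h _; case: Rlt_dec => // h'.
    exfalso; apply: h'; rewrite S_INR; lra.
  - move=> k _; rewrite /g4; apply: Rmult_le_pos; first lra.
    apply: Rinv_ge0; apply: Rlt_le; apply: r4_pos; have := pos_INR k; rewrite S_INR; lra.
  - move=> k /andP [hk _]; move: hk; rewrite /yb; case: Rlt_dec => // h _.
    rewrite /g4 /Rdiv; apply: Rmult_le_compat_l; first lra.
    by apply: Rinv_le_contravar => //; apply: r4_le; lra.
  - apply: Rmult_le_pos; first lra; apply: Rlt_le; exact: Rinv_0_lt_compat.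
have hB : \big[Rplus/R0]_(0 <= q < N.+1 | P q) bq q <= 20 / r4 y.
  apply: (Rle_trans _ _ _ (Bpart_regroup y N)).
  apply: (Rle_trans _ (\big[Rplus/R0]_(k <- index_iota 0 N.+1) Dk y k)).
    by apply: Rsum_le => k _; exact: step_c.
  exact: step_d.
have -> : 148 / r4 y = 128 / r4 y + 20 / r4 y by field; lra.
exact: Rplus_le_compat.
Qed.
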